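(* Let $\Gamma_1=(V_1,m_1,\tau_1)$ and $\Gamma_2=(V_2,m_2,\tau_2)$ be weak $W$-graphs such that $\mathbb{C}V_1$ and $\mathbb{C}V_2$ are isomorphic representations of $W$. Then $\Gamma_1$ and $\Gamma_2$ have the same $\tau$-invariant, i.e. $\{\tau_1(v):v\in V_1\}=\{\tau_2(v):v\in V_2\}$.
   Context: $W$ is a Weyl group with a fixed set $\Delta$ of simple roots; for a root $\alpha$, $s_\alpha$ is the reflection in the hyperplane orthogonal to $\alpha$. A weak $W$-graph is a triple $\Gamma=(V,m,\tau)$ where $V$ is a finite set, $m:V\times V\to\mathbb{C}$ is a map, and $\tau$ is a map from $V$ to the power set of $\Delta$, such that the linear maps $s_\alpha:\mathbb{C}V\to\mathbb{C}V$ ($\alpha\in\Delta$) given on basis vectors by $s_\alpha(v)=-v$ if $\alpha\in\tau(v)$ and $s_\alpha(v)=v-\sum_{u\in V,\ \alpha\in\tau(u)} m(u,v)u$ if $\alpha\notin\tau(v)$ define a representation of $W$ on $\mathbb{C}V$. The $\tau$-invariant of $\Gamma$ is the image of $\tau$, the set $\{\tau(v): v\in V\}$. *)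

(* Defs.v *)
From HB Require Import structures.
From mathcomp Require Import all_boot all_order all_algebra all_fingroup.
From mathcomp Require Import mxrepresentation.
From mathcomp Require Import complex reals.
Set Implicit Arguments. Unset Strict Implicit. Unset Printing Implicit Defensive.
Import Order.TTheory GRing.Theory Num.Theory.
Local Open Scope ring_scope.

Definition dotv (R : realType) (n : nat) (x y : 'rV[R]_n) : R := (x *m y^T) 0 0.

(* Matrix (acting on row vectors, x |-> x *m reflmx a) of the reflection in
   the hyperplane orthogonal to a:  x |-> x - 2 (x,a)/(a,a) a. *)
Definition reflmx (R : realType) (n : nat) (a : 'rV[R]_n) : 'M[R]_n :=
  1%:M - (2 / dotv a a) *: (a^T *m a).

Definition is_root_system (R : realType) (n : nat) (Phi : seq 'rV[R]_n) : Prop :=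
  [/\ 0 \notin Phi,
      (forall a b, a \in Phi -> b \in Phi -> b *m reflmx a \in Phi),
      (forall a b, a \in Phi -> b \in Phi ->
         exists z : int, 2 * dotv b a / dotv a a = z%:~R),
      (forall a (c : R), a \in Phi -> c *: a \in Phi -> c = 1 \/ c = -1) &
      (forall x : 'rV[R]_n, (forall a, a \in Phi -> dotv x a = 0) -> x = 0)].

Definition is_base (R : realType) (n : nat) (Phi : seq 'rV[R]_n)
    (D : finType) (r : D -> 'rV[R]_n) : Prop :=
  [/\ (forall a, r a \in Phi),
      (forall c : D -> R, \sum_(a : D) c a *: r a = 0 -> forall a, c a = 0) &
      (forall b, b \in Phi -> exists c : D -> int,
          b = \sum_(a : D) (c a)%:~R *: r a /\
          ((forall a, 0 <= c a) \/ (forall a, c a <= 0)))].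

Definition is_Weyl_group (gT : finGroupType) (W : {group gT})
    (D : finType) (s : D -> gT) : Prop :=
  [/\ (forall a, s a \in W),
      W :=: <<[set s a | a : D]>>%g &
      exists (R : realType) (n : nat) (Phi : seq 'rV[R]_n) (r : D -> 'rV[R]_n)
             (rho : mx_representation R W n),
        [/\ is_root_system Phi, is_base Phi r, mx_faithful rho &
            forall a, rho (s a) = reflmx (r a)]].

(* The matrix of the operator s_a on CV attached to (V, m, tau), in the row
   vector convention of mathcomp: row i is the image of the basis vector
   enum_val i.  Entry (u,v) is the coefficient of u in s_a(v). *)
Definition wgraph_mx (C : fieldType) (D V : finType) (m : V -> V -> C)
    (tau : V -> {set D}) (a : D) : 'M[C]_#|V| :=
  \matrix_(i, j)
    let v := enum_val i in let u := enum_val j in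
    if a \in tau v then - (i == j)%:R
    else (i == j)%:R - (if a \in tau u then m u v else 0).

Definition wgraph_repr (C : fieldType) (gT : finGroupType) (W : {group gT})
    (D V : finType) (s : D -> gT) (m : V -> V -> C) (tau : V -> {set D})
    (rG : mx_representation C W #|V|) : Prop :=
  forall a, rG (s a) = wgraph_mx m tau a.

Definition tau_invariant (D V : finType) (tau : V -> {set D}) : {set {set D}} :=
  [set tau v | v : V].

(* Main.v *)
Require Import Defs.
From HB Require Import structures.
From mathcomp Require Import all_boot all_order all_algebra all_fingroup.
From mathcomp Require Import mxrepresentation.
From mathcomp Require Import complex reals.
Set Implicit Arguments. Unset Strict Implicit. Unset Printing Implicit Defensive.
Import Order.TTheory GRing.Theory Num.Theory.
Local Open Scope ring_scope.

Definition EE (C : fieldType) (D : finType) n (A : D -> 'M[C]_n) (J : {set D}) : 'M[C]_n :=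
  (\big[capmx/1%:M]_(a | a \in J) kermx (A a + 1%:M))%MS.

Lemma rank_memeq (C : fieldType) m1 m2 n (A : 'M[C]_(m1,n)) (B : 'M[C]_(m2,n)) :
  (forall x : 'rV_n, (x <= A)%MS = (x <= B)%MS) -> \rank A = \rank B.
Proof.
move=> h; apply/eqP; rewrite eqn_leq; apply/andP; split; apply: mxrankS;
  apply/row_subP => i; [rewrite -h | rewrite h]; exact: row_sub.
Qed.

Lemma EE_transport (C : fieldType) (D : finType) n1 n2 (A1 : D -> 'M[C]_n1)
  (A2 : D -> 'M[C]_n2) (B : 'M[C]_(n1, n2)) J :
  row_free B -> (forall a, A1 a *m B = B *m A2 a) ->
  (\rank (EE A1 J) <= \rank (EE A2 J))%N.
Proof.
move=> fB hB; rewrite -(mxrankMfree _ fB); apply: mxrankS.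
apply/sub_bigcapmxP => a aJ; rewrite sub_kermx -mulmxA.
have -> : B *m (A2 a + 1%:M) = (A1 a + 1%:M) *m B.
  by rewrite mulmxDr mulmxDl -hB mulmx1 mul1mx.
rewrite mulmxA.
have : (EE A1 J <= kermx (A1 a + 1%:M))%MS by rewrite /EE; apply: (bigcapmx_inf a aJ); exact: submx_refl.
rewrite sub_kermx => /eqP ->; by rewrite mul0mx.
Qed.

Section Sel.
Variables (C : fieldType) (n : nat) (S : {set 'I_n}).
Definition Q : 'M[C]_(#|S|, n) := \matrix_(r, j) ((enum_val r == j)%:R).

Lemma rankQ : \rank Q = #|S|.
Proof.
apply/eqP; rewrite -/(row_free Q); apply/row_freeP; exists Q^T.
apply/matrixP => r r'; rewrite !mxE (bigD1 (enum_val r)) //= big1 => [|k ne].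
  by rewrite !mxE eqxx mul1r addr0 eq_sym (inj_eq enum_val_inj).
by rewrite !mxE eq_sym (negbTE ne) mul0r.
Qed.

Lemma memQ (x : 'rV[C]_n) : (x <= Q)%MS = [forall i, (x 0 i != 0) ==> (i \in S)].
Proof.
apply/idP/forallP => [/submxP [y ->] j | h].
  apply/implyP; apply: contraR => jS; rewrite mxE big1 // => r _.
  rewrite mxE; case: eqP => [e|_]; last by rewrite mulr0.
  by move: (enum_valP r); rewrite e (negbTE jS).
rewrite [x]matrix_sum_delta big_ord1 summx_sub // => j _.
case: (x 0 j =P 0) => [->|nz]; first by rewrite scale0r sub0mx.
have jS : j \in S by have := h j; move/eqP: nz => nz; rewrite nz.
rewrite scalemx_sub //.
have -> : delta_mx 0 j = row (enum_rank_in jS j) Q.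
  apply/rowP => k; rewrite !mxE enum_rankK_in //.
  by rewrite eqxx eq_sym.
exact: row_sub.
Qed.
End Sel.
Section WG.
Variables (C : numFieldType) (D V : finType) (m : V -> V -> C) (tau : V -> {set D}).
Let A := wgraph_mx m tau.

Lemma Mx_row a i j : a \in tau (enum_val i) -> (A a + 1%:M) i j = 0.
Proof. by move=> h; rewrite !mxE /= h addNr. Qed.

Lemma Mx_col a i j : a \notin tau (enum_val j) -> (A a + 1%:M) i j = (i == j)%:R * 2.
Proof.
move=> h; rewrite !mxE /= (negbTE h) subr0.
case: (eqVneq i j) => [eij|ne]; first subst i.
  by rewrite (negbTE h) /= mul1r -mulr2n.
by case: ifP => _ /=; rewrite ?oppr0 !mul0r ?addr0.
Qed.

Lemma kerM a (x : 'rV[C]_#|V|) :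
  (x *m (A a + 1%:M) == 0) = [forall i, (x 0 i != 0) ==> (a \in tau (enum_val i))].
Proof.
apply/eqP/forallP => [h i | h].
  apply/implyP => nz; apply/negPn/negP => ha.
  have : (x *m (A a + 1%:M)) 0 i = x 0 i * 2.
    rewrite mxE (bigD1 i) //= Mx_col // eqxx big1 ?addr0 ?mul1r // => j ne.
    by rewrite Mx_col // (negbTE ne) mul0r mulr0.
  rewrite h mxE => /esym/eqP; rewrite mulf_eq0 (negbTE nz) /=.
  by rewrite pnatr_eq0.
apply/rowP => j; rewrite !mxE big1 // => i _.
have := h i; case: (x 0 i =P 0) => [-> _|_ /= hi]; first by rewrite mul0r.
by rewrite Mx_row // mulr0.
Qed.

Lemma memE J (x : 'rV[C]_#|V|) :
  (x <= EE A J)%MS = [forall i, (x 0 i != 0) ==> (J \subset tau (enum_val i))].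
Proof.
apply/sub_bigcapmxP/forallP => [h i | h a aJ].
  apply/implyP => nz; apply/subsetP => a aJ.
  by have := h a aJ; rewrite sub_kermx kerM => /forallP /(_ i); rewrite nz.
rewrite sub_kermx kerM; apply/forallP => i; apply/implyP => nz.
by have := h i; rewrite nz /= => /subsetP; apply.
Qed.

Lemma rankE J : \rank (EE A J) = #|[set v | J \subset tau v]|.
Proof.
rewrite (@rank_memeq _ _ _ _ _ (Q C [set i | J \subset tau (enum_val i)])).
  rewrite rankQ.
  have -> : [set i | J \subset tau (enum_val i)] = enum_rank @: [set v | J \subset tau v].
    apply/setP => i; rewrite inE -{2}(enum_valK i) mem_imset ?inE //; exact: enum_rank_inj.
  by rewrite card_imset //; exact: enum_rank_inj.
move=> x; rewrite memE memQ; apply: eq_forallb => i; by rewrite inE.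
Qed.
End WG.
Definition Nc (D V : finType) (tau : V -> {set D}) (J : {set D}) := #|[set v | J \subset tau v]|.
Definition cc (D V : finType) (tau : V -> {set D}) (K : {set D}) := #|[set v | tau v == K]|.

Lemma N_sum (D V : finType) (tau : V -> {set D}) J :
  Nc tau J = (\sum_(K : {set D} | J \subset K) cc tau K)%N.
Proof.
rewrite /Nc -sum1_card (eq_bigl (fun v => J \subset tau v)) => [|v]; last by rewrite inE.
rewrite (partition_big tau (fun K => J \subset K)) //=.
apply: eq_bigr => K JK; rewrite /cc -sum1_card; apply: eq_bigl => v; rewrite inE.
by case: eqP => [->|] ; rewrite ?JK ?andbF.
Qed.

Lemma c_eq (D V1 V2 : finType) (tau1 : V1 -> {set D}) (tau2 : V2 -> {set D}) :
  (forall J, Nc tau1 J = Nc tau2 J) -> forall K, cc tau1 K = cc tau2 K.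
Proof.
move=> hN K; move: {2}#|~: K|.+1 (ltnSn #|~:K|) => k; elim: k K => // k IH K hK.
have := hN K; rewrite !N_sum (bigD1 K) //= [X in _ = X -> _](bigD1 K) //=.
have -> : (\sum_(L : {set D} | (K \subset L) && (L != K)) cc tau1 L =
           \sum_(L : {set D} | (K \subset L) && (L != K)) cc tau2 L)%N.
  apply: eq_bigr => L /andP [KL neL]; apply: IH.
  have pKL : K \proper L by rewrite properEneq eq_sym neL KL.
  rewrite -properC in pKL; move/proper_card: pKL => lt.
  exact: leq_trans lt hK.
by move/addIn.
Qed.

Lemma inv_c (D V : finType) (tau : V -> {set D}) J :
  (J \in tau_invariant tau) = (0 < cc tau J)%N.
Proof.
apply/imsetP/card_gt0P => [[v _ ->]|[v]]; first by exists v; rewrite inE.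
by rewrite inE => /eqP <-; exists v.
Qed.

Theorem corollary2p11 (R : realType) (gT : finGroupType) (W : {group gT})
    (D : finType) (s : D -> gT) (HW : is_Weyl_group W s)
    (V1 V2 : finType) (m1 : V1 -> V1 -> R[i]) (m2 : V2 -> V2 -> R[i])
    (tau1 : V1 -> {set D}) (tau2 : V2 -> {set D})
    (rG1 : mx_representation R[i] W #|V1|) (rG2 : mx_representation R[i] W #|V2|)
    (H1 : wgraph_repr s m1 tau1 rG1) (H2 : wgraph_repr s m2 tau2 rG2)
    (Hiso : mx_rsim rG1 rG2) :
  tau_invariant tau1 = tau_invariant tau2.
Proof.
case: HW => sW _ _.
have hN J : Nc tau1 J = Nc tau2 J.
  rewrite /Nc -(rankE m1) -(rankE m2); apply/eqP; rewrite eqn_leq; apply/andP; split.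
    case: Hiso => B _ fB hB; apply: EE_transport fB _ => a.
    by rewrite -H1 -H2; exact: hB (sW a).
  case: (mx_rsim_sym Hiso) => B _ fB hB; apply: EE_transport fB _ => a.
  by rewrite -H1 -H2; exact: hB (sW a).
by apply/setP => J; rewrite !inv_c (c_eq hN).
Qed.
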